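(* Extend the Thue–Morse sequence $t$ to all of $\mathbb{Z}$ by setting $t(n)=t(-1-n)$ for $n<0$, and define $f(i,j)=t(i+j)$ for all $i,j\in\mathbb{Z}$. Then the coloring $(f(i,j))_{i,j\in\mathbb{Z}}$ of $\mathbb{Z}\times\mathbb{Z}$ is frameless: there do not exist integers $m,n$ and integers $p,q\ge1$ such that $f(m,n+i)=f(m+p,n+i)$ for all $0\le i\le q$ and $f(m+j,n)=f(m+j,n+q)$ for all $0\le j\le p$.
   Context: The Thue–Morse sequence is $t(n)=$ (number of $1$ bits in the binary representation of $n$) mod $2$ for $n\ge0$. A picture frame in a coloring $f$ of $\mathbb{Z}\times\mathbb{Z}$ is a rectangular block $\{m,\dots,m+p\}\times\{n,\dots,n+q\}$ with $p,q\ge1$ whose first and last rows agree and whose first and last columns agree; $f$ is frameless if it contains no picture frame. *)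

(* Defs.v *)
From Stdlib Require Import ZArith.
Open Scope Z_scope.

Fixpoint pos_popcount (p : positive) : nat :=
  match p with
  | xH => 1%nat
  | xO q => pos_popcount q
  | xI q => S (pos_popcount q)
  end.

Definition popcount (n : N) : nat :=
  match n with
  | N0 => 0%nat
  | Npos p => pos_popcount p
  end.

Definition thue_morse (n : N) : nat := Nat.modulo (popcount n) 2.

Definition tZ (n : Z) : nat :=
  if n <? 0 then thue_morse (Z.to_N (-1 - n)) else thue_morse (Z.to_N n).

Definition f (i j : Z) : nat := tZ (i + j).

Definition picture_frame {C : Type} (g : Z -> Z -> C) (m n p q : Z) : Prop :=
  1 <= p /\ 1 <= q /\
  (forall i, 0 <= i <= q -> g m (n + i) = g (m + p) (n + i)) /\
  (forall j, 0 <= j <= p -> g (m + j) n = g (m + j) (n + q)).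

Definition frameless {C : Type} (g : Z -> Z -> C) : Prop :=
  ~ exists m n p q, picture_frame g m n p q.

(* Main.v *)
Require Import Defs.
From Stdlib Require Import ZArith Lia.
Open Scope Z_scope.

Lemma popcount_double (n : N) : popcount (N.double n) = popcount n.
Proof. destruct n; reflexivity. Qed.

Lemma popcount_succ_double (n : N) : popcount (N.succ_double n) = S (popcount n).
Proof. destruct n; reflexivity. Qed.

Lemma tm_lt2 n : (thue_morse n < 2)%nat.
Proof. unfold thue_morse. apply Nat.mod_upper_bound. lia. Qed.

Lemma tm_double n : thue_morse (N.double n) = thue_morse n.
Proof. unfold thue_morse. now rewrite popcount_double. Qed.

Lemma tm_succ_double n : thue_morse (N.succ_double n) = (1 - thue_morse n)%nat.
Proof.
  unfold thue_morse. rewrite popcount_succ_double.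
  replace (S (popcount n)) with (1 + popcount n)%nat by lia.
  rewrite Nat.Div0.add_mod. pose proof (Nat.mod_upper_bound (popcount n) 2).
  destruct (Nat.modulo (popcount n) 2) as [|[|k]] eqn:E; simpl; try reflexivity. lia.
Qed.

Lemma tm_2x x : 0 <= x -> thue_morse (Z.to_N (2*x)) = thue_morse (Z.to_N x).
Proof.
  intros H. replace (Z.to_N (2*x)) with (N.double (Z.to_N x)) by lia.
  apply tm_double.
Qed.

Lemma tm_2x1 x : 0 <= x -> thue_morse (Z.to_N (2*x+1)) = (1 - thue_morse (Z.to_N x))%nat.
Proof.
  intros H. replace (Z.to_N (2*x+1)) with (N.succ_double (Z.to_N x)) by lia.
  apply tm_succ_double.
Qed.

Definition T' (x : Z) : nat := if x <? 0 then (1 - tZ x)%nat else tZ x.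

Lemma tZ_lt2 x : (tZ x < 2)%nat.
Proof. unfold tZ. destruct (x <? 0); apply tm_lt2. Qed.
Lemma T'_lt2 x : (T' x < 2)%nat.
Proof. unfold T'. pose proof (tZ_lt2 x). destruct (x <? 0); lia. Qed.

Lemma tZ_even x : tZ (2*x) = T' x.
Proof.
  unfold T', tZ. destruct (x <? 0) eqn:E.
  - assert (2*x <? 0 = true) as -> by lia.
    replace (-1 - 2*x) with (2*(-1-x)+1) by lia. rewrite tm_2x1 by lia. reflexivity.
  - assert (2*x <? 0 = false) as -> by lia. apply tm_2x. lia.
Qed.

Lemma tZ_odd x : tZ (2*x+1) = (1 - T' x)%nat.
Proof.
  pose proof (tZ_lt2 x) as Hl. unfold T'. unfold tZ in *. destruct (x <? 0) eqn:E.
  - assert (2*x+1 <? 0 = true) as -> by lia.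
    replace (-1 - (2*x+1)) with (2*(-1-x)) by lia. rewrite tm_2x by lia. lia.
  - assert (2*x+1 <? 0 = false) as -> by lia. apply tm_2x1. lia.
Qed.

Lemma T'_even x : T' (2*x) = tZ x.
Proof.
  pose proof (tZ_lt2 x). unfold T' at 1. destruct (2*x <? 0) eqn:E.
  - rewrite tZ_even. unfold T'. assert (x <? 0 = true) as -> by lia. lia.
  - rewrite tZ_even. unfold T'. assert (x <? 0 = false) as -> by lia. lia.
Qed.

Lemma T'_odd x : T' (2*x+1) = (1 - tZ x)%nat.
Proof.
  pose proof (tZ_lt2 x). unfold T' at 1. destruct (2*x+1 <? 0) eqn:E.
  - rewrite tZ_odd. unfold T'. assert (x <? 0 = true) as -> by lia. pose proof (tZ_lt2 x). lia.
  - rewrite tZ_odd. unfold T'. assert (x <? 0 = false) as -> by lia. lia.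
Qed.

Definition overlap (h : Z -> nat) (a p : Z) : Prop :=
  forall y, a <= y <= a + p -> h y = h (y + p).

Section Mu.
Variables g h : Z -> nat.
Hypothesis g2 : forall x, (g x < 2)%nat.
Hypothesis he : forall x, h (2*x) = g x.
Hypothesis ho : forall x, h (2*x+1) = (1 - g x)%nat.

Lemma h2 y : (h y < 2)%nat.
Proof.
  destruct (Z.Even_or_Odd y) as [[x ->]|[x ->]].
  - rewrite he; auto.
  - rewrite ho. pose proof (g2 x). lia.
Qed.

Lemma pairdiff x : h (2*x) <> h (2*x+1).
Proof. rewrite he, ho. pose proof (g2 x). lia. Qed.

Lemma odd_case a s : ~ overlap h a (2*s+1) \/ s < 0.
Proof.
  destruct (Z_lt_le_dec s 0) as [H|H]; [now right|left].
  intros Ov.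
  assert (Cd : forall y, a <= y <= a + 2*(2*s+1) - 1 -> h y <> h (y+1)).
  { intros y Hy. destruct (Z.Even_or_Odd y) as [[x ->]|[x ->]].
    - apply pairdiff.
    - destruct (Z_le_gt_dec (2*x+1) (a + (2*s+1) - 1)).
      + rewrite (Ov (2*x+1)) by lia. rewrite (Ov (2*x+1+1)) by lia.
        replace (2*x+1+(2*s+1)) with (2*(x+s+1)) by lia.
        replace (2*x+1+1+(2*s+1)) with (2*(x+s+1)+1) by lia.
        apply pairdiff.
      + replace (2*x+1+1) with (2*(x-s)+1 + (2*s+1)) by lia.
        replace (2*x+1) with (2*(x-s) + (2*s+1)) by lia.
        rewrite <- (Ov (2*(x-s))) by lia.
        rewrite <- (Ov (2*(x-s)+1)) by lia.
        apply pairdiff. }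
  assert (Two : forall k, 0 <= k -> 2*k <= 2*(2*s+1) -> h (a + 2*k) = h a).
  { intros k Hk. rewrite <- (Z2Nat.id k Hk). generalize (Z.to_nat k) as K.
    clear k Hk. induction K as [|K IHK]; intros Hb.
    - f_equal; lia.
    - set (k' := Z.of_nat K). assert (IH : h (a + 2*k') = h a) by (apply IHK; lia).
      assert (Hk' : 0 <= k') by lia.
      replace (Z.of_nat (S K)) with (Z.succ k') in * by lia.
      pose proof (Cd (a + 2*k') ltac:(lia)). pose proof (Cd (a+2*k'+1) ltac:(lia)).
      pose proof (h2 (a+2*k')). pose proof (h2 (a+2*k'+1)). pose proof (h2 (a+2*k'+1+1)).
      replace (a + 2 * Z.succ k') with (a+2*k'+1+1) by lia.
      rewrite <- IH by lia. lia. }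
  pose proof (Two s ltac:(lia) ltac:(lia)).
  pose proof (Cd (a+2*s) ltac:(lia)).
  pose proof (Ov a ltac:(lia)).
  replace (a + 2*s + 1) with (a + (2*s+1)) in * by lia.
  pose proof (h2 a). pose proof (h2 (a + (2*s+1))). lia.
Qed.

Lemma even_case a r : 0 <= r -> overlap h a (2*r) -> exists b, overlap g b r.
Proof.
  intros Hr Ov.
  destruct (Z.Even_or_Odd a) as [[b ->]|[b ->]]; exists b; intros x Hx.
  - rewrite <- he, <- he. replace (2*(x+r)) with (2*x+2*r) by lia. apply Ov. lia.
  - pose proof (g2 x). pose proof (g2 (x+r)).
    assert (E : h (2*x+1) = h (2*(x+r)+1)).
    { replace (2*(x+r)+1) with (2*x+1+2*r) by lia. apply Ov. lia. }
    rewrite !ho in E. lia.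
Qed.
End Mu.

Lemma no_overlap : forall (N : nat) p a, 1 <= p <= Z.of_nat N ->
  ~ overlap tZ a p /\ ~ overlap T' a p.
Proof.
  induction N as [|N IH]; intros p a Hp; [lia|].
  destruct (Z.Even_or_Odd p) as [[r ->]|[s ->]].
  - split; intros Ov.
    + destruct (even_case T' tZ T'_lt2 tZ_even tZ_odd a r ltac:(lia) Ov) as [b Hb].
      destruct (IH r b ltac:(lia)) as [_ C]. exact (C Hb).
    + destruct (even_case tZ T' tZ_lt2 T'_even T'_odd a r ltac:(lia) Ov) as [b Hb].
      destruct (IH r b ltac:(lia)) as [C _]. exact (C Hb).
  - split.
    + destruct (odd_case T' tZ T'_lt2 tZ_even tZ_odd a s); [assumption|lia].
    + destruct (odd_case tZ T' tZ_lt2 T'_even T'_odd a s); [assumption|lia].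
Qed.

Theorem theorem2 :
  ~ exists m n p q : Z,
      (1 <= p)%Z /\ (1 <= q)%Z /\
      (forall i : Z, (0 <= i <= q)%Z -> f m (n + i)%Z = f (m + p)%Z (n + i)%Z) /\
      (forall j : Z, (0 <= j <= p)%Z -> f (m + j)%Z n = f (m + j)%Z (n + q)%Z).
Proof.
  intros (m & n & p & q & Hp & Hq & H1 & H2). unfold f in *.
  destruct (Z_le_gt_dec p q).
  - destruct (no_overlap (Z.to_nat p) p (m+n) ltac:(lia)) as [C _]. apply C.
    intros y Hy. specialize (H1 (y - (m+n)) ltac:(lia)).
    replace (m + (n + (y - (m+n)))) with y in H1 by lia.
    replace (m + p + (n + (y - (m+n)))) with (y+p) in H1 by lia. exact H1.
  - destruct (no_overlap (Z.to_nat q) q (m+n) ltac:(lia)) as [C _]. apply C.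
    intros y Hy. specialize (H2 (y - (m+n)) ltac:(lia)).
    replace (m + (y - (m+n)) + n) with y in H2 by lia.
    replace (m + (y - (m+n)) + (n + q)) with (y+q) in H2 by lia. exact H2.
Qed.
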